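(* Let $G$ be a connected simple graph on $n$ vertices with Laplacian $L$. If $\mu$ is an integer with $\mu\notin[0,n+1]$, then $L$ is not $\mu$-collapsed, i.e. the matrix $L-\mu\,\mathrm{Id}$ is spread.
   Context: A graph is simple if any two distinct vertices are joined by at most one edge (no loops). The Laplacian $L=(\ell_{ij})\in M_n(\mathbb{Z})$ has $\ell_{ii}$ equal to the degree of $v_i$ and $\ell_{ij}=-1$ if $v_i,v_j$ are adjacent, $0$ otherwise ($i\neq j$). For $M\in M_n(\mathbb{Z})$, let $\mathrm{Im}(M)$ be the $\mathbb{Z}$-span of its columns; $M$ is spread if the quotient map $\mathbb{Z}^n\to\mathbb{Z}^n/\mathrm{Im}(M)$ is injective on the standard basis $\{e_1,\dots,e_n\}$ (equivalently, $e_i-e_j\notin\mathrm{Im}(M)$ for all $i\neq j$). For an integer $\mu$, $M$ is $\mu$-collapsed if $M-\mu\,\mathrm{Id}$ is not spread. *)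

(* Defs.v *)
From HB Require Import structures.
From mathcomp Require Import all_boot all_order all_algebra.
Set Implicit Arguments. Unset Strict Implicit. Unset Printing Implicit Defensive.
Import Order.TTheory GRing.Theory Num.Theory.
Local Open Scope ring_scope.

Definition simple_graph (n : nat) (e : rel 'I_n) : Prop :=
  symmetric e /\ irreflexive e.

Definition connected_graph (n : nat) (e : rel 'I_n) : Prop :=
  forall i j : 'I_n, connect e i j.

Definition degree (n : nat) (e : rel 'I_n) (i : 'I_n) : nat :=
  #|[set j | e i j]|.

Definition laplacian (n : nat) (e : rel 'I_n) : 'M[int]_n :=
  \matrix_(i, j) (if i == j then (degree e i)%:Z
                  else if e i j then -1 else 0).

Definition std_basis (n : nat) (i : 'I_n) : 'cV[int]_n := delta_mx i 0.

Definition in_image (n : nat) (M : 'M[int]_n) (v : 'cV[int]_n) : Prop :=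
  exists x : 'cV[int]_n, M *m x = v.

Definition spread (n : nat) (M : 'M[int]_n) : Prop :=
  forall i j : 'I_n, i != j -> ~ in_image M (std_basis i - std_basis j).

Definition collapsed (n : nat) (M : 'M[int]_n) (mu : int) : Prop :=
  ~ spread (M - mu%:M).

(* Main.v *)
Require Import Defs.
From mathcomp Require Import all_boot all_order all_algebra.
From mathcomp Require Import ring lra zify.
Import Order.TTheory GRing.Theory Num.Theory.
Local Open Scope ring_scope.
Set Implicit Arguments. Unset Strict Implicit.

Lemma lapE n (e : rel 'I_n) (Hs : simple_graph e) k l :
  laplacian e k l = (if l == k then (degree e k)%:Z else 0) - (if e k l then 1 else 0).
Proof.
rewrite /laplacian mxE eq_sym; case: (eqVneq l k) => [->|nlk]; first by rewrite (proj2 Hs k) subr0; case: (k == k).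
by rewrite sub0r; case: (e k l).
Qed.

Lemma lap_rowsum n (e : rel 'I_n) (Hs : simple_graph e) k :
  \sum_l laplacian e k l = 0.
Proof.
rewrite (eq_bigr _ (fun l _ => lapE Hs k l)) sumrB -!big_mkcond /= big_pred1_eq.
by rewrite sumr_const /degree cardsE -natz subrr.
Qed.

Lemma lap_sym n (e : rel 'I_n) (Hs : simple_graph e) k l :
  laplacian e k l = laplacian e l k.
Proof.
rewrite /laplacian !mxE eq_sym; case: eqP => [->//|_]; by rewrite (proj1 Hs).
Qed.

Lemma sum_delta n (i : 'I_n) : \sum_k (((k == i) : nat)%:R : int) = 1.
Proof. by rewrite (bigD1 i) //= eqxx big1 ?addr0 // => k /negbTE ->. Qed.

Theorem theorem3p1 (n : nat) (e : rel 'I_n) (mu : int) :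
  simple_graph e -> connected_graph e ->
  (mu < 0 \/ (n%:Z + 1 < mu)) ->
  ~ collapsed (laplacian e) mu.
Proof.
move=> Hs Hc Hmu Hcol; apply: Hcol => i j ij [x Hx].
set M := laplacian e - mu%:M.
have ME k l : M k l = laplacian e k l - mu *+ (k == l) by rewrite !mxE.
pose y := fun l : 'I_n => (x l 0 : int).
pose r := fun k : 'I_n => ((((k == i) : nat)%:R - ((k == j) : nat)%:R) : int).
have HL k : \sum_l M k l * y l = r k.
  have := congr1 (fun A : 'M[int]_(n,1) => A k 0) Hx; rewrite !mxE /r /y !andbT => <-.
  by apply: eq_bigr => l _.
have rowM k : \sum_l M k l = - mu.
  rewrite (eq_bigr _ (fun l _ => ME k l)) sumrB lap_rowsum // sub0r.
  by rewrite (bigD1 k) //= eqxx big1 ?addr0 // => l /negbTE; rewrite eq_sym => ->.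
have colM l : \sum_k M k l = - mu.
  by rewrite -(rowM l); apply: eq_bigr => k _; rewrite !ME lap_sym // eq_sym.
have mu0 : mu != 0 by case: Hmu; lia.
have sumy : \sum_l y l = 0.
  have : \sum_k r k = 0 by rewrite /r sumrB !sum_delta subrr.
  rewrite -(eq_bigr _ (fun k _ => HL k)) exchange_big /=.
  rewrite (eq_bigr (fun l => - mu * y l)) => [|l _]; last by rewrite -mulr_suml colM.
  rewrite -mulr_sumr => /eqP; rewrite mulf_eq0 oppr_eq0 (negbTE mu0) /= => /eqP //.
have [k _ kmax] := @arg_maxP _ _ _ i xpredT y isT.
set m := y k.
have kmax' l : y l <= m by exact: kmax.
have ri : r i = 1 by rewrite /r eqxx (negbTE ij) subr0.
have rge k' : -1 <= r k' by rewrite /r; case: (k' == i); case: (k' == j).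
have rle k' : 1 <= r k' -> k' = i.
  rewrite /r; case: eqP => // _; case: (k' == j) => //.
have m1 : 1 <= m.
  suff : 0 < m by lia.
  rewrite ltNge; apply/negP => Hk0.
  have y0 l : y l = 0.
    apply: oppr_inj; rewrite oppr0.
    apply: (@psumr_eq0P _ _ xpredT (fun l => - y l)) => //.
      by move=> l' _; rewrite oppr_ge0; apply: le_trans (kmax' l') Hk0.
    by rewrite sumrN sumy oppr0.
  have := HL i; rewrite big1 ?ri // => l _; by rewrite y0 mulr0.
case: Hmu => Hmu.
- have key k' : y k' = m -> r k' = - mu * m + \sum_l M k' l * (y l - m).
    move=> _; rewrite -HL (eq_bigr _ (fun l _ => mulrBr _ _ _)) sumrB -mulr_suml rowM.
    by ring.
  have nonneg k' l : y k' = m -> 0 <= M k' l * (y l - m).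
    move=> Hk'; rewrite ME lapE //; case: (eqVneq l k') => [->|nlk].
      by rewrite Hk' subrr mulr0.
    rewrite /= subr0 sub0r mulNr oppr_ge0.
    have := kmax' l; case: (e k' l); lia.
  have ge k' : y k' = m -> - mu * m <= r k'.
    move=> Hk'; rewrite key // lerDl; apply: sumr_ge0 => l _; exact: nonneg.
  have mum : 1 <= - mu * m.
    have : 0 <= (- mu - 1) * (m - 1) by apply: mulr_ge0; lia.
    lia.
  have ki : k = i by apply: rle; apply: le_trans mum (ge k erefl).
  have [p pth pl] := connectP (Hc i j).
  case: p pth pl => [/= _ ji|l0 p /= /andP [eil0 _] _].
    by move: ij; rewrite ji eqxx.
  have l0i : l0 != i by apply/eqP => Hl; move: eil0; rewrite Hl (proj2 Hs).
  have : - mu * m + M i l0 * (y l0 - m) <= r i.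
    rewrite key -?ki // lerD2l (bigD1 l0) //= lerDl.
    by apply: sumr_ge0 => l _; rewrite ki; apply: nonneg; rewrite -ki.
  rewrite ri ME lapE // (negbTE l0i) eil0 sub0r.
  have := kmax' l0; move=> H1 H2.
  rewrite eq_sym (negbTE l0i) mulr0n subr0 in H2.
  have yl0 : y l0 = m by lia.
  by move: l0i; rewrite (rle l0) ?eqxx //; have := ge l0 yl0; lia.
- have : r k <= (n%:R - mu) * m.
    rewrite -HL -[X in X <= _]addr0 -[X in _ + X]sumy -big_split /=.
    rewrite (eq_bigr (fun l => (M k l + 1) * y l)) => [|l _]; last by rewrite mulrDl mul1r.
    apply: (@le_trans _ _ (\sum_l (M k l + 1) * m)).
      apply: ler_sum => l _; rewrite ME lapE //; case: (eqVneq l k) => [->|nlk].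
        by [].
      rewrite /= subr0 sub0r.
      have := kmax' l; case: (e k l); lia.
    rewrite -mulr_suml big_split /= rowM sumr_const card_ord.
    by rewrite addrC.
  have := rge k; move: Hmu m1; rewrite -natz; nra.
Qed.
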